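(* For every finite set of formulas $\Gamma\cup\{\varphi\}\subseteq For$: $\Gamma \vdash_{\bf Tm} \varphi$ if and only if there exist sets of formulas $\Upsilon,\Upsilon'$ such that $\Gamma\cup\{\circ \delta \ : \ \delta \in \Upsilon\}\cup\{\circ' \gamma \ : \ \gamma \in \Upsilon'\} \vdash_{\bf Km} \varphi$, where $\circ\delta:=\Box\delta\to\Diamond\delta$ and $\circ'\gamma:=(\Box\gamma\to\gamma)\wedge(\Box\neg\gamma\to\neg\gamma)$.
   Context: Formulas are built from a denumerable set of propositional variables by the unary connectives $\neg$, $\Box$ and the binary connective $\to$; $For$ is the set of all formulas. Abbreviations: $\Diamond\alpha:=\neg\Box\neg\alpha$, $\alpha\vee\beta:=\neg\alpha\to\beta$, $\alpha\wedge\beta:=\neg(\alpha\to\neg\beta)$. All Hilbert calculi below have as axioms all instances (over $For$) of the axiom schemas of a standard Hilbert calculus for classical propositional logic in the signature $\{\neg,\to\}$, plus the listed modal schemas, with modus ponens as the only rule; $\Gamma\vdash_{\bf L}\alpha$ means there is a derivation of $\alpha$ from $\Gamma$ in ${\bf L}$. ${\bf Km}$: (K') $\Diamond\alpha\to(\Box(\alpha\to\beta)\to(\Box\alpha\to\Box\beta))$; (K1') $\Diamond\neg\beta\to(\Box(\alpha\to\beta)\to(\Diamond\alpha\to\Diamond\beta))$; (K2') $\Diamond\alpha\to(\Diamond(\alpha\to\beta)\to(\Box\alpha\to\Diamond\beta))$; (M3') $(\Diamond\alpha\vee\Diamond\neg\alpha)\to(\Diamond\beta\to\Diamond(\alpha\to\beta))$;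 (M4') $\Diamond\neg\beta\to(\Diamond\neg\alpha\to\Diamond(\alpha\to\beta))$; (I1) $(\Box\alpha\wedge\Box\neg\alpha)\to(\Box(\alpha\to\beta)\wedge\Box\neg(\alpha\to\beta))$; (I2) $(\Box\beta\wedge\Box\neg\beta)\to(\Box(\alpha\to\beta)\wedge\Box\neg(\alpha\to\beta))$; (M1) $\neg\Diamond\alpha\to\Box(\alpha\to\beta)$; (M2) $\Box\beta\to\Box(\alpha\to\beta)$; (DN1) $\Box\alpha\to\Box\neg\neg\alpha$; (DN2) $\Box\neg\neg\alpha\to\Box\alpha$. ${\bf Tm}$: (K) $\Box(\alpha\to\beta)\to(\Box\alpha\to\Box\beta)$; (K1) $\Box(\alpha\to\beta)\to(\Diamond\alpha\to\Diamond\beta)$; (K2) $\Diamond(\alpha\to\beta)\to(\Box\alpha\to\Diamond\beta)$; (M1); (M2); (M3) $\Diamond\beta\to\Diamond(\alpha\to\beta)$; (M4) $\Diamond\neg\alpha\to\Diamond(\alpha\to\beta)$; (DN1); (DN2); (T) $\Box\alpha\to\alpha$. *)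

(* Defs.v *)
From Stdlib Require Import List.
Import ListNotations.

Inductive formula : Type :=
| Var : nat -> formula
| Neg : formula -> formula
| Box : formula -> formula
| Imp : formula -> formula -> formula.

Definition Dia (a : formula) : formula := Neg (Box (Neg a)).
Definition Or (a b : formula) : formula := Imp (Neg a) b.
Definition And (a b : formula) : formula := Neg (Imp a (Neg b)).

(* Standard Hilbert calculus for classical propositional logic in {neg, ->}
   (Lukasiewicz's axioms); modus ponens is the only rule. *)
Inductive CPL_ax : formula -> Prop :=
| A1 a b : CPL_ax (Imp a (Imp b a))
| A2 a b c : CPL_ax (Imp (Imp a (Imp b c)) (Imp (Imp a b) (Imp a c)))
| A3 a b : CPL_ax (Imp (Imp (Neg a) (Neg b)) (Imp b a)).

Inductive Km_ax : formula -> Prop :=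
| Km_cpl a : CPL_ax a -> Km_ax a
| Km_K' a b : Km_ax (Imp (Dia a) (Imp (Box (Imp a b)) (Imp (Box a) (Box b))))
| Km_K1' a b : Km_ax (Imp (Dia (Neg b)) (Imp (Box (Imp a b)) (Imp (Dia a) (Dia b))))
| Km_K2' a b : Km_ax (Imp (Dia a) (Imp (Dia (Imp a b)) (Imp (Box a) (Dia b))))
| Km_M3' a b : Km_ax (Imp (Or (Dia a) (Dia (Neg a))) (Imp (Dia b) (Dia (Imp a b))))
| Km_M4' a b : Km_ax (Imp (Dia (Neg b)) (Imp (Dia (Neg a)) (Dia (Imp a b))))
| Km_I1 a b : Km_ax (Imp (And (Box a) (Box (Neg a)))
                         (And (Box (Imp a b)) (Box (Neg (Imp a b)))))
| Km_I2 a b : Km_ax (Imp (And (Box b) (Box (Neg b)))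
                         (And (Box (Imp a b)) (Box (Neg (Imp a b)))))
| Km_M1 a b : Km_ax (Imp (Neg (Dia a)) (Box (Imp a b)))
| Km_M2 a b : Km_ax (Imp (Box b) (Box (Imp a b)))
| Km_DN1 a : Km_ax (Imp (Box a) (Box (Neg (Neg a))))
| Km_DN2 a : Km_ax (Imp (Box (Neg (Neg a))) (Box a)).

Inductive Tm_ax : formula -> Prop :=
| Tm_cpl a : CPL_ax a -> Tm_ax a
| Tm_K a b : Tm_ax (Imp (Box (Imp a b)) (Imp (Box a) (Box b)))
| Tm_K1 a b : Tm_ax (Imp (Box (Imp a b)) (Imp (Dia a) (Dia b)))
| Tm_K2 a b : Tm_ax (Imp (Dia (Imp a b)) (Imp (Box a) (Dia b)))
| Tm_M1 a b : Tm_ax (Imp (Neg (Dia a)) (Box (Imp a b)))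
| Tm_M2 a b : Tm_ax (Imp (Box b) (Box (Imp a b)))
| Tm_M3 a b : Tm_ax (Imp (Dia b) (Dia (Imp a b)))
| Tm_M4 a b : Tm_ax (Imp (Dia (Neg a)) (Dia (Imp a b)))
| Tm_DN1 a : Tm_ax (Imp (Box a) (Box (Neg (Neg a))))
| Tm_DN2 a : Tm_ax (Imp (Box (Neg (Neg a))) (Box a))
| Tm_T a : Tm_ax (Imp (Box a) a).

Inductive derivable (Ax : formula -> Prop) (Gamma : formula -> Prop)
  : formula -> Prop :=
| d_hyp a : Gamma a -> derivable Ax Gamma a
| d_ax a : Ax a -> derivable Ax Gamma a
| d_mp a b : derivable Ax Gamma (Imp a b) -> derivable Ax Gamma a ->
             derivable Ax Gamma b.

Definition Km_derives := derivable Km_ax.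
Definition Tm_derives := derivable Tm_ax.

Definition circ (d : formula) : formula := Imp (Box d) (Dia d).
Definition circ' (g : formula) : formula :=
  And (Imp (Box g) g) (Imp (Box (Neg g)) (Neg g)).

Definition set_of_list (l : list formula) : formula -> Prop := fun x => In x l.

(* Main.v *)
Require Import Defs.
From Stdlib Require Import List.

Definition ext (G : formula -> Prop) (a : formula) : formula -> Prop :=
  fun x => G x \/ x = a.

Lemma mono Ax (G D : formula -> Prop) a :
  (forall x, G x -> D x) -> derivable Ax G a -> derivable Ax D a.
Proof.
  intros HGD H; induction H.
  - apply d_hyp; auto.
  - apply d_ax; auto.
  - eapply d_mp; eauto.
Qed.

Ltac hyp := apply d_hyp; unfold ext; intuition.
Ltac cpl := apply d_ax; match goal with HA : _ |- _ => apply HA end; constructor.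

Section P.
Variable Ax : formula -> Prop.
Hypothesis HA : forall a, CPL_ax a -> Ax a.

Lemma weak G a b : derivable Ax G b -> derivable Ax (ext G a) b.
Proof. apply mono. unfold ext; auto. Qed.

Lemma idf G a : derivable Ax G (Imp a a).
Proof.
  eapply d_mp. eapply d_mp. apply d_ax, HA, (A2 a (Imp a a) a). cpl. cpl.
Qed.

Lemma dt G a b : derivable Ax (ext G a) b -> derivable Ax G (Imp a b).
Proof.
  intro H; induction H.
  - destruct H as [H|H].
    + eapply d_mp. cpl. apply d_hyp; auto.
    + subst. apply idf.
  - eapply d_mp. cpl. apply d_ax; auto.
  - eapply d_mp. eapply d_mp. apply d_ax, HA, A2. exact IHderivable1. exact IHderivable2.
Qed.

Lemma undt G a b : derivable Ax G (Imp a b) -> derivable Ax (ext G a) b.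
Proof. intro H. eapply d_mp. apply weak; exact H. hyp. Qed.

Lemma efq G a b : derivable Ax G (Imp (Neg a) (Imp a b)).
Proof.
  apply dt, dt. eapply d_mp. eapply d_mp. apply d_ax, HA, (A3 b a). eapply d_mp. apply d_ax, HA, A1. hyp. hyp.
Qed.

Lemma dne G a : derivable Ax G (Imp (Neg (Neg a)) a).
Proof.
  apply dt. eapply d_mp. eapply d_mp. apply d_ax, HA, (A3 a (Neg (Neg a))).
  eapply d_mp. apply d_ax, HA, (A3 (Neg (Neg (Neg a))) (Neg a)).
  eapply d_mp. cpl. hyp. hyp.
Qed.

Lemma dni G a : derivable Ax G (Imp a (Neg (Neg a))).
Proof.
  eapply d_mp. apply d_ax, HA, (A3 (Neg (Neg a)) a). apply dne.
Qed.

Lemma contra G a b : derivable Ax G (Imp (Imp a b) (Imp (Neg b) (Neg a))).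
Proof.
  apply dt. eapply d_mp. apply d_ax, HA, (A3 (Neg a) (Neg b)).
  apply dt. eapply d_mp. apply dni. eapply d_mp. hyp.
  eapply d_mp. apply dne. hyp.
Qed.

Lemma clav G q : derivable Ax G (Imp (Imp (Neg q) q) q).
Proof.
  apply dt. eapply d_mp. eapply d_mp. apply d_ax, HA, (A3 q (Imp (Neg q) q)).
  apply dt. apply d_mp with q. apply d_mp with (Neg q). apply efq. hyp.
  apply d_mp with (Neg q); hyp. hyp.
Qed.

Lemma cases G p q : derivable Ax G (Imp p q) -> derivable Ax G (Imp (Neg p) q) ->
  derivable Ax G q.
Proof.
  intros H1 H2. eapply d_mp. apply clav. apply dt.
  eapply d_mp. apply weak, H1. eapply d_mp. apply dne.
  eapply d_mp. eapply d_mp. apply contra. apply weak, H2. hyp.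
Qed.

Lemma and_i G a b : derivable Ax G a -> derivable Ax G b -> derivable Ax G (And a b).
Proof.
  intros H1 H2. unfold And. eapply d_mp. eapply d_mp. apply contra.
  apply dt. eapply d_mp. hyp. apply weak, H1.
  eapply d_mp. apply dni. exact H2.
Qed.

Lemma and_e1 G a b : derivable Ax G (And a b) -> derivable Ax G a.
Proof.
  intros H. eapply d_mp. apply dne. eapply d_mp. eapply d_mp. apply contra.
  apply efq. exact H.
Qed.

Lemma and_e2 G a b : derivable Ax G (And a b) -> derivable Ax G b.
Proof.
  intros H. eapply d_mp. apply dne. eapply d_mp. eapply d_mp. apply contra.
  cpl. exact H.
Qed.
End P.

Lemma circT G d : derivable Tm_ax G (circ d).
Proof.
  unfold circ, Dia. apply (dt _ Tm_cpl).
  apply d_mp with (Neg (Neg d)).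
  apply d_mp with (Imp (Box (Neg d)) (Neg d)). apply (contra _ Tm_cpl).
  apply d_ax, Tm_T.
  apply d_mp with d. apply (dni _ Tm_cpl).
  apply d_mp with (Box d). apply d_ax, Tm_T. hyp.
Qed.

Lemma circ'T G g : derivable Tm_ax G (circ' g).
Proof. apply (and_i _ Tm_cpl); apply d_ax, Tm_T. Qed.

Lemma I_T G a c : derivable Tm_ax G (Imp (And (Box a) (Box (Neg a))) c).
Proof.
  apply (dt _ Tm_cpl).
  apply d_mp with a. apply d_mp with (Neg a). apply (efq _ Tm_cpl).
  apply d_mp with (Box (Neg a)). apply d_ax, Tm_T. eapply (and_e2 _ Tm_cpl). hyp.
  apply d_mp with (Box a). apply d_ax, Tm_T. eapply (and_e1 _ Tm_cpl). hyp.
Qed.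

Ltac wk := eapply d_mp; [apply d_ax, Tm_cpl, A1 | apply d_ax; first [apply Tm_K|apply Tm_K1|apply Tm_K2|apply Tm_M3|apply Tm_M4]].

Lemma KmT G x : Km_ax x -> derivable Tm_ax G x.
Proof.
  intro H; destruct H.
  - apply d_ax, Tm_cpl; assumption.
  - wk.
  - wk.
  - wk.
  - wk.
  - wk.
  - apply I_T.
  - apply I_T.
  - apply d_ax; first [apply Tm_M1|apply Tm_M2|apply Tm_DN1|apply Tm_DN2].
  - apply d_ax; first [apply Tm_M1|apply Tm_M2|apply Tm_DN1|apply Tm_DN2].
  - apply d_ax; first [apply Tm_M1|apply Tm_M2|apply Tm_DN1|apply Tm_DN2].
  - apply d_ax; first [apply Tm_M1|apply Tm_M2|apply Tm_DN1|apply Tm_DN2].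
Qed.

Lemma back (G H : formula -> Prop) phi :
  (forall x, H x -> G x \/ (exists d, x = circ d) \/ (exists g, x = circ' g)) ->
  derivable Km_ax H phi -> derivable Tm_ax G phi.
Proof.
  intros HH D; induction D.
  - destruct (HH _ H0) as [h | [[d ->] | [g ->]]].
    + apply d_hyp; auto.
    + apply circT.
    + apply circ'T.
  - apply KmT; auto.
  - eapply d_mp; eauto.
Qed.

Definition Good (D : formula -> Prop) := (forall d, D (circ d)) /\ (forall g, D (circ' g)).

Ltac good := apply d_hyp; unfold ext; repeat left;
  match goal with H : Good _ |- _ => first [apply (proj1 H) | apply (proj2 H)] end.

Lemma boxdia D a : Good D -> derivable Km_ax D (Imp (Box a) (Dia a)).
Proof. intro; good. Qed.

Lemma notdianeg D b : Good D -> derivable Km_ax D (Imp (Neg (Dia (Neg b))) (Dia b)).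
Proof.
  intro HG. apply (dt _ Km_cpl).
  apply d_mp with (Box b). good.
  apply d_mp with (Box (Neg (Neg b))). apply d_ax, Km_DN2.
  apply d_mp with (Neg (Dia (Neg b))). apply (dne _ Km_cpl). hyp.
Qed.

Lemma M3K D a b : Good D -> derivable Km_ax D (Imp (Dia b) (Dia (Imp a b))).
Proof.
  intro HG. apply d_mp with (Or (Dia a) (Dia (Neg a))). apply d_ax, Km_M3'.
  unfold Or. apply (dt _ Km_cpl).
  apply d_mp with (Box (Neg a)). good.
  apply d_mp with (Neg (Dia a)). apply (dne _ Km_cpl). hyp.
Qed.

Lemma TmK D x : Good D -> Tm_ax x -> derivable Km_ax D x.
Proof.
  intros HG H; destruct H.
  - apply d_ax, Km_cpl; assumption.
  - apply (dt _ Km_cpl), (dt _ Km_cpl).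
    apply d_mp with (Box a); [| hyp]. apply d_mp with (Box (Imp a b)); [| hyp].
    apply d_mp with (Dia a). apply d_ax, Km_K'.
    apply d_mp with (Box a). good. hyp.
  - apply (dt _ Km_cpl), (dt _ Km_cpl).
    apply (cases _ Km_cpl) with (Dia (Neg b)).
    + apply (dt _ Km_cpl).
      apply d_mp with (Dia a); [| hyp]. apply d_mp with (Box (Imp a b)); [| hyp].
      apply d_mp with (Dia (Neg b)); [| hyp]. apply d_ax, Km_K1'.
    + apply notdianeg. split; intros; unfold ext; repeat left; first [apply (proj1 HG) | apply (proj2 HG)].
  - apply (dt _ Km_cpl), (dt _ Km_cpl).
    apply d_mp with (Box a); [| hyp]. apply d_mp with (Dia (Imp a b)); [| hyp].
    apply d_mp with (Dia a). apply d_ax, Km_K2'.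
    apply d_mp with (Box a). good. hyp.
  - apply d_ax, Km_M1.
  - apply d_ax, Km_M2.
  - apply M3K; auto.
  - apply (dt _ Km_cpl).
    apply (cases _ Km_cpl) with (Dia (Neg b)).
    + apply (dt _ Km_cpl).
      apply d_mp with (Dia (Neg a)); [| hyp].
      apply d_mp with (Dia (Neg b)); [| hyp]. apply d_ax, Km_M4'.
    + apply d_mp with (Imp (Dia b) (Dia (Imp a b))).
      * apply (dt _ Km_cpl), (dt _ Km_cpl).
        apply d_mp with (Dia b). hyp.
        apply d_mp with (Neg (Dia (Neg b))). apply notdianeg. split; intros; unfold ext; repeat left; first [apply (proj1 HG) | apply (proj2 HG)]. hyp.
      * apply M3K. split; intros; unfold ext; repeat left; first [apply (proj1 HG) | apply (proj2 HG)].
  - apply d_ax, Km_DN1.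
  - apply d_ax, Km_DN2.
  - eapply (and_e1 _ Km_cpl). good.
Qed.

Theorem mainTheorem9 (Gamma : list formula) (phi : formula) :
  Tm_derives (set_of_list Gamma) phi <->
  exists (Ups Ups' : formula -> Prop),
    Km_derives
      (fun x => set_of_list Gamma x
                \/ (exists d, Ups d /\ x = circ d)
                \/ (exists g, Ups' g /\ x = circ' g))
      phi.
Proof.
  split.
  - intro H. exists (fun _ => True), (fun _ => True).
    induction H.
    + apply d_hyp; left; auto.
    + apply TmK; auto. split; intros.
      * right; left; eauto.
      * right; right; eauto.
    + eapply d_mp; eauto.
  - intros [U [U' H]]. eapply back; [| exact H].
    intros x [h | [[d [_ ->]] | [g [_ ->]]]]; eauto.
Qed.
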